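(* For all integers $n \geq 0$ and $0 \leq k \leq n$, $$(-1)^k\, 2^{-2n}\binom{2n+1}{n-k}(2k+1) = (2n+1)\sum_{j=k}^{n}(-1)^j\, 2^{-2j}\binom{n}{j}\binom{2j+1}{j-k}.$$ *)

(* Defs.v *)
From HB Require Import structures.
From mathcomp Require Import all_boot all_order all_algebra.

(* Main.v *)
Require Import Defs.
From HB Require Import structures.
From Stdlib Require Import Lia Psatz.
From mathcomp Require Import all_boot all_order all_algebra.
Import Order.TTheory GRing.Theory Num.Theory.
Local Open Scope ring_scope.
Lemma sq_gen (R : comPzRingType) (x : R) : x *+ 4 - (1 + x)^+2 = - (1 - x)^+2.
Proof.
rewrite sqrrD sqrrB !expr1n !mul1r !opprD !opprK !addrA.
rewrite [x *+ 4](_ : _ = x *+ 2 + x *+ 2) ?addrK; last by rewrite -mulrnDr.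
rewrite !mulr2n -!addrA.
rewrite (addrCA x (-1)) addNKr (addrCA x (-1)) addNKr.
by rewrite (addrCA x (-1)) (addrCA x (-1)).
Qed.

Lemma coef_pow (c : rat) (m i : nat) :
  ((1 + c *: 'X : {poly rat}) ^+ m)`_i = c ^+ i * ('C(m, i))%:R.
Proof.
elim: m i => [|m IH] i.
  by rewrite expr0 coefC; case: i => [|i] //=; rewrite ?expr0 ?bin0 ?mulr1 ?mulr0.
rewrite exprSr mulrDr mulr1 -scalerAr coefD coefZ coefMX IH.
case: i => [|i] /=; first by rewrite !bin0 mulr0 addr0.
by rewrite IH binS natrD mulrDr exprS mulrA.
Qed.

Lemma term (n k j : nat) : (j <= n)%N -> (k <= n)%N ->
  ((1 + 'X : {poly rat}) * (((4:rat) *: 'X)^+(n-j) * ((-1:rat) *: (1 + 'X)^+2)^+j *+ 'C(n,j)))`_(n-k)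
  = if (k <= j)%N then (4:rat)^+(n-j) * (-1)^+j * ('C(n,j))%:R * ('C(2*j+1, j-k))%:R else 0.
Proof.
move=> hj hk.
rewrite !exprZn -scalerAl -scalerAr (mulrnAr (1 + 'X)) -!scalerAr coefMn !coefZ.
rewrite [(1 + 'X) * _]mulrCA -exprM -exprS coefXnM.
case: (leqP k j) => hkj.
  rewrite ltnNge (leq_sub2lE _ hk) hkj /= subnAC (subKn hj).
  rewrite -(scale1r 'X) coef_pow expr1n mul1r.
  rewrite -!mulrnAr -[_ *+ 'C(n, j)]mulr_natr.
  by rewrite !mulrA mulrAC mulnC addn1.
by rewrite (ltn_sub2lE j hk) hkj mulr0 mulr0 mul0rn.
Qed.

Lemma sumform (n k : nat) : (k <= n)%N ->
  \sum_(k <= j < n.+1) (-1:rat)^+j * 4^+(n-j) * ('C(n,j))%:R * ('C(2*j+1,j-k))%:R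
  = ((1 + 'X : {poly rat}) * (((4:rat) *: 'X) + (-1:rat) *: (1 + 'X)^+2)^+n)`_(n-k).
Proof.
move=> hk.
rewrite exprDn mulr_sumr coef_sum.
rewrite (eq_bigr (fun j : 'I_n.+1 => if (k <= j)%N then (4:rat)^+(n-j) * (-1)^+j * ('C(n,j))%:R * ('C(2*j+1, j-k))%:R else 0)); last first.
  by move=> i _; rewrite term // -ltnS.
rewrite -(big_mkord xpredT (fun j => if (k <= j)%N then (4:rat)^+(n-j) * (-1)^+j * ('C(n,j))%:R * ('C(2*j+1, j-k))%:R else 0)).
rewrite [RHS](big_cat_nat (n:=k)) ?(leq_trans hk) //.
rewrite [in RHS]big_nat_cond [X in _ = X + _]big1 ?add0r; last first.
  by move=> i /andP[/andP[_ hi] _]; rewrite leqNgt hi.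
apply: eq_big_nat => i /andP[hi _]; rewrite hi.
by congr (_ * _ * _); rewrite mulrC.
Qed.

Lemma coefform (n m : nat) :
  ((1 + 'X : {poly rat}) * (((4:rat) *: 'X) + (-1:rat) *: (1 + 'X)^+2)^+n)`_m
  = (-1)^+n * ((-1)^+m * ('C(2*n,m))%:R + (if m is m'.+1 then (-1)^+m' * ('C(2*n,m'))%:R else 0)).
Proof.
rewrite scaleN1r (_ : (4:rat) *: 'X = 'X *+ 4); last by rewrite -scaler_nat.
rewrite sq_gen -scaleN1r exprZn -scalerAr coefZ -exprM mulrDl mul1r coefD coefXM.
rewrite -(scaleN1r 'X) !coef_pow.
by case: m.
Qed.

Lemma natid (k m : nat) :
  ((2*k+1) * ('C(2*(k+m.+1)+1, m.+1)) + (2*(k+m.+1)+1) * 'C(2*(k+m.+1), m) = (2*(k+m.+1)+1) * 'C(2*(k+m.+1), m.+1))%N.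
Proof.
have H := mul_bin_diag (2*(k+m.+1)).+1 m.
rewrite /= binS in H.
rewrite !addn1 binS.
move: H; set A := 'C(_, m.+1); set B := 'C(_, m); clearbody A B.
rewrite -!multE -!plusE. move=> H. nia.
Qed.

Lemma sign2 (R: comPzRingType) (m:nat) (A B : R) : (-1)^+m.+1 * ((-1)^+m.+1 * A + (-1)^+m * B) = A - B.
Proof.
rewrite mulrDr !mulrA -!exprD addnS addSn addnn !exprS -mul2n exprM sqrrN !expr1n.
by rewrite !mulr1 mulrNN mulr1 !mul1r mulN1r.
Qed.

Theorem mainTheorem12 (n k : nat) (hk : (k <= n)%N) :
  (-1 : rat) ^+ k * (2 ^+ (2 * n))^-1 * ('C(2 * n + 1, n - k))%:R * (2 * k + 1)%:R
  = (2 * n + 1)%:R *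
    \sum_(k <= j < n.+1) (-1 : rat) ^+ j * (2 ^+ (2 * j))^-1
        * ('C(n, j))%:R * ('C(2 * j + 1, j - k))%:R.
Proof.
have h4 : forall a : nat, (2:rat) ^+ (2 * a) = 4 ^+ a.
  by move=> a; rewrite exprM -natrX.
rewrite (eq_big_nat _ _ (F2 := fun j => (4 ^+ n)^-1 *
   ((-1:rat)^+j * 4^+(n-j) * ('C(n,j))%:R * ('C(2*j+1,j-k))%:R))); last first.
  move=> j /andP[_ hj]; rewrite ltnS in hj.
  rewrite !mulrA [_^-1 * _]mulrC -!mulrA; congr (_ * _); rewrite !mulrA; congr (_ * _ * _).
  rewrite h4 (_ : 4 ^+ n = 4 ^+ j * 4 ^+ (n - j)) ?invfM -?mulrA ?mulVf ?mulr1 //.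
    by apply: expf_neq0.
  by rewrite -exprD subnKC.
rewrite -mulr_sumr sumform // coefform h4.
have [m ->] : exists m, n = (k + m)%N by exists (n - k)%N; rewrite subnKC.
rewrite addKn.
case: m => [|m].
  by rewrite !addn0 !bin0 expr0 !mul1r addr0 !mulr1 [RHS]mulrC [_^-1 * _]mulrC.
have e := congr1 (fun x : nat => x%:R : rat) (natid k m).
rewrite /= natrD !natrM in e.
have e' := e; move/(canRL (addrK _)): e' => e'.
rewrite [(-1) ^+ (k + _)]exprD -[_ * _ * (_ + _)]mulrA sign2.
rewrite -[LHS]mulrA [_%:R * (2 * k + 1)%:R]mulrC e' -mulrBr.
rewrite mulrCA; congr (_ * _).
by rewrite mulrCA mulrA.
Qed.
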